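(* Let $d\ge2$, $i\in\{1,\dots,d\}$, $\widetilde x\in\mathbb{R}^{d-1}$, $y\in\mathbb{R}$ and $x = (\widetilde{x}_1,\dots,\widetilde{x}_{i-1},y,\widetilde{x}_i,\dots,\widetilde{x}_{d-1})^\top\in\mathbb{R}^d$. For $\theta\in\{\pm1\}^d$ write $\theta_{-i} := (\theta_1,\dots,\theta_{i-1},\theta_{i+1},\dots,\theta_d)^\top$. Then: 1. If $(\theta,p)=\mathrm{csa}_{\text{even}}(x)$ and $\theta_i = 1$, then $\mathrm{csa}_{\text{odd}}(\widetilde x) = (\theta_{-i}, p-1)$. 2. If $(\theta,p)=\mathrm{csa}_{\text{odd}}(x)$ and $\theta_i = 1$, then $\mathrm{csa}_{\text{even}}(\widetilde x) = (\theta_{-i}, p-1)$. 3. If $(\theta,p)=\mathrm{csa}_{\text{even}}(x)$ and $\theta_i = -1$, then $\mathrm{csa}_{\text{even}}(\widetilde x) = (\theta_{-i}, p)$. 4. If $(\theta,p)=\mathrm{csa}_{\text{odd}}(x)$ and $\theta_i = -1$, then $\mathrm{csa}_{\text{odd}}(\widetilde x) = (\theta_{-i}, p)$.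
   Context: Cut-search procedures: for $u\in\mathbb{R}^k$, $\mathrm{csa}_{\text{even}}(u)$ is computed as follows: set $\theta_j = 1$ if $u_j>1/2$ and $\theta_j=-1$ otherwise ($j=1,\dots,k$); if $|\{j:\theta_j=1\}|$ is even, let $j^*$ be the smallest index in $\arg\min_j |u_j - 1/2|$ and replace $\theta_{j^*}$ by $-\theta_{j^*}$; finally set $p = |\{j:\theta_j = 1\}| - 1$ and output $(\theta,p)$. $\mathrm{csa}_{\text{odd}}(u)$ is identical except that the flip is performed when $|\{j:\theta_j=1\}|$ is odd. (These output the only potentially violated forbidden-set inequality $\theta^\top w\le p$ of $\operatorname{conv}\{w\in\{0,1\}^k:\sum w_j \text{ even}\}$, respectively of its odd counterpart, at $\Pi_{[0,1]^k}(u)$.) *)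

(* Defs.v *)
From HB Require Import structures.
From mathcomp Require Import all_boot all_order all_algebra.
Set Implicit Arguments. Unset Strict Implicit. Unset Printing Implicit Defensive.
Import Order.TTheory GRing.Theory Num.Theory.
Local Open Scope ring_scope.

Section CSA.
Variable R : realFieldType.

Definition is_argmin (k : nat) (u : 'I_k -> R) (j : 'I_k) : bool :=
  [forall l, `|u j - 2^-1| <= `|u l - 2^-1|].

Definition jstar (k : nat) (u : 'I_k.+1 -> R) : 'I_k.+1 :=
  odflt ord0 [pick j | is_argmin u j &&
                       [forall l : 'I_k.+1, (l < j)%N ==> ~~ is_argmin u l]].

Definition theta0 (k : nat) (u : 'I_k -> R) (j : 'I_k) : int :=
  if 2^-1 < u j then 1 else -1.

Definition csa (b : bool) (k : nat) (u : 'I_k.+1 -> R) : {ffun 'I_k.+1 -> int} * int :=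
  let cnt := #|[pred j | theta0 u j == 1]| in
  let flip := odd cnt == b in
  let th := [ffun j => if flip && (j == jstar u) then - theta0 u j else theta0 u j] in
  (th, (#|[pred j | th j == 1]|)%:Z - 1).

Definition csa_even (k : nat) (u : 'I_k.+1 -> R) := csa false u.
Definition csa_odd (k : nat) (u : 'I_k.+1 -> R) := csa true u.

End CSA.

(* x = (xt_1,..,xt_{i-1}, y, xt_i, .., xt_{d-1}) *)
Definition insert_at {T : Type} (n : nat) (i : 'I_n.+1) (xt : 'I_n -> T) (y : T)
  : 'I_n.+1 -> T :=
  fun j => match unlift i j with Some j' => xt j' | None => y end.

Definition drop_coord {T : Type} (n : nat) (i : 'I_n.+1) (th : {ffun 'I_n.+1 -> T})
  : {ffun 'I_n -> T} := [ffun j => th (lift i j)].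

(* Main.v *)
Require Import Defs.
From HB Require Import structures.
From mathcomp Require Import all_boot all_order all_algebra.
From mathcomp Require Import zify.
Set Implicit Arguments. Unset Strict Implicit.
Import Order.TTheory GRing.Theory Num.Theory.
Local Open Scope ring_scope.

Section Aux.
Variable R : realFieldType.

Definition jspec k (u : 'I_k.+1 -> R) (j : 'I_k.+1) :=
  is_argmin u j && [forall l : 'I_k.+1, (l < j)%N ==> ~~ is_argmin u l].

Lemma jstarP k (u : 'I_k.+1 -> R) : jspec u (jstar u).
Proof.
rewrite /jstar; case: pickP => [j Hj|H]; first exact: Hj; exfalso.
have [j0 _ Hj0] := @arg_minP _ R _ ord0 xpredT (fun j => `|u j - 2^-1|) isT.
have A0 : is_argmin u j0 by apply/forallP => l; exact: Hj0.
have [j1 A1 Hj1] := arg_minnP (fun j : 'I_k.+1 => nat_of_ord j) A0.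
move: (H j1); rewrite A1 /=; move/negbT/negP; apply.
apply/forallP => l; apply/implyP => Hl; apply/negP => Al.
by have := Hj1 l Al; rewrite leqNgt Hl.
Qed.

Lemma jspec_uniq k (u : 'I_k.+1 -> R) j j' : jspec u j -> jspec u j' -> j = j'.
Proof.
move=> /andP[A /forallP B] /andP[A' /forallP B'].
apply: val_inj => /=; case: (ltngtP j j') => // h.
  by move: (B' j); rewrite h A.
by move: (B j'); rewrite h A'.
Qed.

Lemma lift_lt n (i : 'I_n.+1) a b : (lift i a < lift i b)%N = (a < b)%N.
Proof. rewrite /= /bump; case: (leqP i a); case: (leqP i b) => /=; lia. Qed.

Lemma card_lift n (i : 'I_n.+1) (P : pred 'I_n.+1) :
  #|P| = (P i + #|[pred j | P (lift i j)]|)%N.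
Proof.
rewrite -!sum1_card big_mkcond /= (bigD1_ord i) //= big_mkcond /=.
rewrite [in RHS]big_mkcond /=.
by rewrite -topredE /=; case: (P i).
Qed.

Lemma jstar_lift n (i : 'I_n.+2) (xt : 'I_n.+1 -> R) y :
  jstar (insert_at i xt y) != i ->
  jstar (insert_at i xt y) = lift i (jstar xt).
Proof.
set x := insert_at i xt y.
have xl j : x (lift i j) = xt j by rewrite /x /insert_at liftK.
have xi : x i = y by rewrite /x /insert_at unlift_none.
move=> HJ; case: (unliftP i (jstar x)) => [J'|] EJ; last by rewrite EJ eqxx in HJ.
move: (jstarP x); rewrite EJ => /andP[/forallP A /forallP B].
suff E : J' = jstar xt by rewrite E.
apply: (jspec_uniq _ (jstarP xt)); apply/andP; split.
  by apply/forallP => l; rewrite -!xl; exact: A.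
apply/forallP => l; apply/implyP => Hl; apply/negP => /forallP Al.
move: (B (lift i l)); rewrite lift_lt Hl /= => /negP; apply.
apply/forallP => m; case: (unliftP i m) => [m'|] ->.
  by rewrite !xl; exact: Al.
rewrite xl; apply: le_trans (Al J') _; rewrite -xl; exact: A.
Qed.

Lemma main n (i : 'I_n.+2) (xt : 'I_n.+1 -> R) y b th p :
  csa b (insert_at i xt y) = (th, p) ->
  csa (b (+) (th i == 1)) xt = (drop_coord i th, p - ((th i == 1) : nat)%:Z).
Proof.
set x := insert_at i xt y.
have xl j : x (lift i j) = xt j by rewrite /x /insert_at liftK.
have Tl j : theta0 x (lift i j) = theta0 xt j by rewrite /theta0 xl.
rewrite /csa.
set cx := #|[pred j | theta0 x j == 1]|.
set ct := #|[pred j | theta0 xt j == 1]|.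
have Ec : cx = ((theta0 x i == 1) + ct)%N.
  rewrite /cx (card_lift i) /ct; congr (_ + _)%N.
  by apply: eq_card => j; rewrite !inE /= Tl.
set J := jstar x.
case => <- <-; rewrite ffunE.
have T1 : (theta0 x i == 1) = ~~ (theta0 x i == -1).
  by rewrite /theta0; case: ifP.
have TN : (- theta0 x i == 1) = (theta0 x i == -1).
  by rewrite -eqr_oppLR.
have Tv : theta0 x i = 1 \/ theta0 x i = -1 by rewrite /theta0; case: ifP; [left|right].
have Hff : [ffun j => if (odd ct == b (+) ((if (odd cx == b) && (i == J) then - theta0 x i else theta0 x i) == 1)) && (j == jstar xt)
             then - theta0 xt j else theta0 xt j] = drop_coord i [ffun j => if (odd cx == b) && (j == J) then - theta0 x j else theta0 x j].
  apply/ffunP => j; rewrite !ffunE Tl.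
  case: (eqVneq i J) => [EJ|NJ].
    rewrite -EJ [lift i j == i]eq_sym (negbTE (neq_lift i j)) andbF /= andbT.
    rewrite Ec oddD; case: Tv => ->; case: b; case: (odd ct) => //.
  rewrite andbF.
  have -> : J = lift i (jstar xt) by apply: jstar_lift; rewrite eq_sym.
  rewrite (inj_eq lift_inj) Ec oddD.
  by case: Tv => ->; case: b; case: (odd ct).
rewrite Hff; congr pair.
set TH := [ffun j => _].
have -> : (if (odd cx == b) && (i == J) then - theta0 x i else theta0 x i) = TH i by rewrite ffunE.
rewrite [in RHS](card_lift i) /=.
have -> : #|[pred j | drop_coord i TH j == 1]| = #|[pred j | TH (lift i j) == 1]|.
  by apply: eq_card => j; rewrite !inE /= ffunE.
rewrite PoszD; case: (TH i == 1) => /=; rewrite ?subr0 ?add0r //.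
lia.
Qed.

End Aux.

Theorem theorem6 (R : realFieldType) (n : nat) (i : 'I_n.+2)
    (xt : 'I_n.+1 -> R) (y : R) :
  let x := insert_at i xt y in
  (forall (th : {ffun 'I_n.+2 -> int}) (p : int),
      csa_even x = (th, p) -> th i = 1 -> csa_odd xt = (drop_coord i th, p - 1)) /\
  (forall (th : {ffun 'I_n.+2 -> int}) (p : int),
      csa_odd x = (th, p) -> th i = 1 -> csa_even xt = (drop_coord i th, p - 1)) /\
  (forall (th : {ffun 'I_n.+2 -> int}) (p : int),
      csa_even x = (th, p) -> th i = -1 -> csa_even xt = (drop_coord i th, p)) /\
  (forall (th : {ffun 'I_n.+2 -> int}) (p : int),
      csa_odd x = (th, p) -> th i = -1 -> csa_odd xt = (drop_coord i th, p)).
Proof.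
have e1 : ((1 : int) == 1) = true by [].
have e2 : ((-1 : int) == 1) = false by [].
move=> x; split; [|split; [|split]] => th p H Hi; move/main: H; rewrite Hi ?e1 ?e2 ?subr0 ?addbT ?addbF; exact.
Qed.
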